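(* For every topology $\mathcal{T}$ on $[n]$, $$\mathcal{P}_s(\mathcal{T})=\bigsqcup_{f\in\mathcal{L}(\mathcal{T})}\{g\mid g\leq f\}=\bigsqcup_{f\in\mathcal{L}(\mathcal{T})}\mathcal{P}_s(\mathcal{T}_f),$$ the unions being disjoint.
   Context: $[n]=\{1,\ldots,n\}$. For a topology $\mathcal{T}$ on $[n]$: $i\leq_{\mathcal{T}}j$ iff every open set containing $i$ contains $j$; $i\sim_{\mathcal{T}}j$ iff $i\leq_{\mathcal{T}}j$ and $j\leq_{\mathcal{T}}i$; $i<_{\mathcal{T}}j$ iff $i\leq_{\mathcal{T}}j$ and not $j\leq_{\mathcal{T}}i$. A packed word of length $n$ is a word $f=f(1)\ldots f(n)$ of positive integers with $\{f(1),\ldots,f(n)\}=\{1,\ldots,\max f\}$. A (strict) T-partition of $\mathcal{T}$ is a packed word $g$ of length $n$ such that: $i\leq_{\mathcal{T}}j\Rightarrow g(i)\leq g(j)$; $i<_{\mathcal{T}}j$ and $i>j\Rightarrow g(i)<g(j)$; if $i<j<k$, $i\sim_{\mathcal{T}}k$ and $g(i)=g(j)=g(k)$ then $i\sim_{\mathcal{T}}j$ and $j\sim_{\mathcal{T}}k$; $\mathcal{P}_s(\mathcal{T})$ is their set. A linear extension of $\mathcal{T}$ is a packed word $f$ of length $n$ with $f(i)=f(j)\Leftrightarrow i\sim_{\mathcal{T}}j$ and $i<_{\mathcal{T}}j\Rightarrow f(i)<f(j)$; $\mathcal{L}(\mathcal{T})$ is their set. For packed words $f,g$ of length $n$, $g\leq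 f$ means: for all $i,j$, $f(i)\leq f(j)\Rightarrow g(i)\leq g(j)$; $f(i)>f(j)$ and $i<j\Rightarrow g(i)>g(j)$; $f(i)=f(j)\Rightarrow g(i)=g(j)$ (the $g$ in the middle union range over packed words of length $n$). For a packed word $f$, $\mathcal{T}_f$ is the topology on $[n]$ with preorder $i\leq j$ iff $f(i)\leq f(j)$. *)

(* Defs.v *)
From mathcomp Require Import all_boot.
Set Implicit Arguments. Unset Strict Implicit. Unset Printing Implicit Defensive.

(* Points of [n] are represented by 'I_n (i.e. {0,...,n-1}, shifted by one;
   the order on indices is the usual order of nat, so the shift is harmless). *)

Definition is_topology (n : nat) (T : {set {set 'I_n}}) : Prop :=
  [/\ set0 \in T, setT \in T,
      (forall U V, U \in T -> V \in T -> U :|: V \in T) &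
      (forall U V, U \in T -> V \in T -> U :&: V \in T)].

Definition leT (n : nat) (T : {set {set 'I_n}}) (i j : 'I_n) : Prop :=
  forall U, U \in T -> i \in U -> j \in U.
Definition simT (n : nat) (T : {set {set 'I_n}}) (i j : 'I_n) : Prop :=
  leT T i j /\ leT T j i.
Definition ltT (n : nat) (T : {set {set 'I_n}}) (i j : 'I_n) : Prop :=
  leT T i j /\ ~ leT T j i.

Definition word n := {ffun 'I_n -> nat}.

Definition packed (n : nat) (f : word n) : Prop :=
  (forall i, 0 < f i) /\
  (forall k, 0 < k -> k <= \max_(i < n) f i -> exists i, f i = k).

Definition Ps (n : nat) (T : {set {set 'I_n}}) (g : word n) : Prop :=
  [/\ packed g,
      (forall i j, leT T i j -> g i <= g j),
      (forall i j : 'I_n, ltT T i j -> j < i -> g i < g j) &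
      (forall i j k : 'I_n, i < j -> j < k -> simT T i k ->
          g i = g j -> g j = g k -> simT T i j /\ simT T j k)].

Definition Lext (n : nat) (T : {set {set 'I_n}}) (f : word n) : Prop :=
  [/\ packed f,
      (forall i j, f i = f j <-> simT T i j) &
      (forall i j, ltT T i j -> f i < f j)].

Definition word_le (n : nat) (g f : word n) : Prop :=
  forall i j : 'I_n,
    [/\ (f i <= f j -> g i <= g j),
        (f j < f i -> i < j -> g j < g i) &
        (f i = f j -> g i = g j)].

(* T_f : the topology whose open sets are the up-sets of the preorder
   i <= j iff f i <= f j; its specialization preorder is exactly that. *)
Definition topology_of_word (n : nat) (f : word n) : {set {set 'I_n}} :=
  [set U : {set 'I_n} | [forall i, forall j, (i \in U) && (f i <= f j) ==> (j \in U)]].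

(* Main.v *)
Require Import Defs.
From mathcomp Require Import all_boot.
From mathcomp Require Import zify.
Set Implicit Arguments. Unset Strict Implicit. Unset Printing Implicit Defensive.

Section Gen.
Variable n : nat.
Implicit Types (T : {set {set 'I_n}}) (i j k : 'I_n).


Definition leb (T : {set {set 'I_n}}) (i j : 'I_n) :=
  [forall U, (U \in T) ==> (i \in U) ==> (j \in U)].

Lemma lebP T i j : reflect (leT T i j) (leb T i j).
Proof.
apply: (iffP forallP) => H U.
- move=> UT iU; move: (H U); by rewrite UT iU.
- apply/implyP=> UT; apply/implyP; exact: H.
Qed.

Lemma leT_refl T i : leT T i i. Proof. by []. Qed.
Lemma leT_trans T i j k : leT T i j -> leT T j k -> leT T i k.
Proof. move=> H1 H2 U UT iU; exact: H2 UT (H1 U UT iU). Qed.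

Lemma packed_of_step (f : word n) : (forall i, 0 < f i) ->
  (forall i, 1 < f i -> exists j, f j = (f i).-1) -> packed f.
Proof.
move=> pos step; split => // k k0 kM.
have npos : 0 < #|'I_n|.
  rewrite card_ord; case: (posnP n) => // n0.
  move: kM; rewrite big_pred0; first lia.
  move=> i; have := ltn_ord i; rewrite {2}n0; by [].
have [i0 Hi0] := eq_bigmax f npos.
suff H : forall d, d < f i0 -> exists j, f j = f i0 - d.
  move: kM; rewrite Hi0 => kM.
  have [|j Hj] := H (f i0 - k); first by lia.
  exists j; lia.
elim=> [|d IH] Hd; first by exists i0; rewrite subn0.
have [j Hj] := IH (ltnW Hd).
have [|j' Hj'] := step j; first by lia.
exists j'; lia.
Qed.

Section Pack.
Variable h : 'I_n -> nat.
Definition Mh := (\max_(i < n) h i).+1.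
Lemma h_lt i : h i < Mh. Proof. rewrite ltnS; exact: leq_bigmax. Qed.
Definition Aset (i : 'I_n) : {set 'I_Mh} :=
  [set v : 'I_Mh | (v <= h i) && [exists j, h j == v]].
Definition pack : word n := [ffun i => #|Aset i|].
Definition hord i : 'I_Mh := Ordinal (h_lt i).
Lemma hord_in i : hord i \in Aset i.
Proof. rewrite inE /= leqnn; apply/existsP; by exists i. Qed.
Lemma Aset_sub i j : h i <= h j -> Aset i \subset Aset j.
Proof.
move=> Hij; apply/subsetP=> v; rewrite !inE => /andP[Hv ->].
by rewrite (leq_trans Hv Hij).
Qed.
Lemma pack_le i j : h i <= h j -> pack i <= pack j.
Proof. move=> H; rewrite !ffunE; exact/subset_leq_card/Aset_sub. Qed.
Lemma pack_lt i j : h i < h j -> pack i < pack j.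
Proof.
move=> H; rewrite !ffunE; apply: proper_card; apply/properP; split.
  exact/Aset_sub/ltnW.
exists (hord j); first exact: hord_in.
by rewrite inE /= leqNgt H.
Qed.
Lemma pack_leE i j : (pack i <= pack j) = (h i <= h j).
Proof.
apply/idP/idP; last exact: pack_le.
move=> H; rewrite leqNgt; apply/negP => /pack_lt; by rewrite ltnNge H.
Qed.
Lemma pack_ltE i j : (pack i < pack j) = (h i < h j).
Proof. by rewrite !ltnNge pack_leE. Qed.
Lemma pack_eqE i j : (pack i == pack j) = (h i == h j).
Proof. by rewrite !eqn_leq !pack_leE. Qed.

Lemma pack_packed : packed pack.
Proof.
apply: packed_of_step.
- move=> i; rewrite ffunE; apply/card_gt0P; exists (hord i); exact: hord_in.
- move=> i; rewrite ffunE => H.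
  rewrite (cardsD1 (hord i)) hord_in add1n /= in H.
  have [v Hv] : exists v, v \in Aset i :\ hord i.
    by apply/card_gt0P; rewrite -ltnS.
  move: Hv; rewrite !inE => /andP[vne /andP[vle /existsP[j0 /eqP hj0]]].
  have hj0lt : h j0 < h i.
    rewrite ltn_neqAle hj0 vle andbT.
    apply: contra vne => /eqP E; apply/eqP; apply: val_inj => /=; exact: E.
  case: (@arg_maxnP _ j0 (fun j => h j < h i) h hj0lt) => j Hj Hmax.
  exists j; rewrite ffunE (cardsD1 (hord i) (Aset i)) hord_in add1n /=.
  apply: eq_card => w; rewrite !inE.
  case E: [exists k, h k == w]; last by rewrite !andbF.
  move: E => /existsP[k /eqP hk]; rewrite !andbT.
  have -> : (w != hord i) = (h k != h i).
    by rewrite -val_eqE /= -hk.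
  rewrite -hk; apply/idP/idP.
  + move=> Hk; apply/andP; split; last by lia.
    by rewrite neq_ltn (leq_ltn_trans Hk Hj).
  + case/andP=> ne le; apply: Hmax; lia.
Qed.
End Pack.

Definition simb (T : {set {set 'I_n}}) i j := leb T i j && leb T j i.
Lemma simbP T i j : reflect (simT T i j) (simb T i j).
Proof.
apply: (iffP andP).
- by case=> /lebP ? /lebP ?.
- by case=> ? ?; split; apply/lebP.
Qed.

Lemma simb_refl T i : simb T i i.
Proof. apply/simbP; split; exact: leT_refl. Qed.
Lemma simb_sym T i j : simb T i j -> simb T j i.
Proof. move=> /simbP[H1 H2]; apply/simbP; split; [exact: H2|exact: H1]. Qed.
Lemma simb_trans T i j k : simb T i j -> simb T j k -> simb T i k.
Proof.
move=> /simbP[H1 H2] /simbP[H3 H4]; apply/simbP; split.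
- exact: (leT_trans H1 H3).
- exact: (leT_trans H4 H2).
Qed.

Lemma PsA T (f g : word n) : Lext T f -> packed g -> word_le g f -> Ps T g.
Proof.
case=> fp fsim flt gp W.
have mono : forall i j, leT T i j -> f i <= f j.
  move=> i j Hij; case: (lebP T j i) => Hji.
  - by rewrite (proj2 (fsim i j) (conj Hij Hji)).
  - exact/ltnW/flt.
split => //.
- move=> i j /mono; by case: (W i j).
- move=> i j /flt Hf ji; by case: (W j i) => _ /(_ Hf ji).
- move=> i j k ij jk /(fsim i k) fik gij gjk.
  have fij : f i = f j.
    case: (ltngtP (f i) (f j)) => [H|H|H] //.
    + case: (W j k) => _ H2 _; have := H2 _ jk; rewrite -fik => /(_ H); lia.
    + case: (W i j) => _ H2 _; have := H2 H ij; lia.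
  split; apply/fsim => //; lia.
Qed.

Lemma packed_le_max (f : word n) i : f i <= \max_(j < n) f j.
Proof. exact: leq_bigmax. Qed.

Lemma packed_leB (f f' : word n) : packed f -> packed f' ->
  (forall i j, f i < f j -> f' i < f' j) -> forall i, f i <= f' i.
Proof.
move=> [pos surj] [pos' _] H.
suff: forall (k : nat) i, f i = k -> k <= f' i by move=> S i; exact: (S (f i) i erefl).
elim=> [|k IH] i Hi; first by [].
case: (posnP k) => [->|kpos]; first exact: pos'.
have [|j Hj] := surj k kpos.
  have := packed_le_max f i; lia.
have := H j i; rewrite Hj Hi ltnSn => /(_ isT).
have := IH j Hj; lia.
Qed.

Lemma charf T (f g : word n) : Lext T f -> word_le g f -> forall i j,
  f i < f j <-> (g i < g j \/ (g i = g j /\ ~ simT T i j /\ i < j)).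
Proof.
case=> fp fsim flt W i j; split.
- move=> H; case: (W i j) => H1 _ _; have := H1 (ltnW H) => gle.
  case: (ltngtP (g i) (g j)) => [lt|gt|eq]; first by left.
  + lia.
  + right; split => //; split.
    * by move/fsim => E; rewrite E ltnn in H.
    * case: (ltngtP i j) => [//|ji|ij].
      - case: (W j i) => _ H2 _; have := H2 H ji; lia.
      - by move: H; rewrite (val_inj ij) ltnn.
- case=> [lt|[eq [ns ij]]].
  + case: (W j i) => H1 _ _; rewrite ltnNge; apply/negP => /H1; lia.
  + case: (ltngtP (f i) (f j)) => [//|gt|E].
    * case: (W i j) => _ H2 _; have := H2 gt ij; lia.
    * by case: ns; apply/fsim.
Qed.

Lemma disj T (f f' g : word n) : Lext T f -> Lext T f' ->
  word_le g f -> word_le g f' -> f = f'.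
Proof.
move=> Lf Lf' W W'.
have H1 : forall i j, f i < f j -> f' i < f' j.
  by move=> i j /(charf Lf W) /(charf Lf' W').
have H2 : forall i j, f' i < f' j -> f i < f j.
  by move=> i j /(charf Lf' W') /(charf Lf W).
case: Lf => fp _ _; case: Lf' => fp' _ _.
apply/ffunP => i; apply/eqP; rewrite eqn_leq.
by rewrite (packed_leB fp fp' H1) (packed_leB fp' fp H2).
Qed.

Lemma leTf (f : word n) i j : leT (topology_of_word f) i j <-> f i <= f j.
Proof.
split.
- move=> H.
  have := H [set k | f i <= f k].
  rewrite !inE leqnn => -> //.
  apply/forallP=> a; apply/forallP=> b; apply/implyP=> /andP[].
  rewrite !inE; exact: leq_trans.
- move=> H U; rewrite inE => /forallP HU iU.
  have := forallP (HU i) j; by rewrite iU H.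
Qed.

Lemma Lext_Tf (f : word n) : packed f -> Lext (topology_of_word f) f.
Proof.
move=> fp; split => //.
- move=> i j; split.
  + by move=> E; split; apply/leTf; rewrite E.
  + case=> /leTf H1 /leTf H2; apply/eqP; rewrite eqn_leq H1 H2 //.
- move=> i j [/leTf H1 H2]; rewrite ltnNge; apply/negP => /leTf; exact: H2.
Qed.

Lemma Ps_Tf_le (f g : word n) : Ps (topology_of_word f) g -> word_le g f.
Proof.
case=> _ mono strict _ i j; split.
- by move/leTf/mono.
- move=> H ij; apply: strict ij; split; first by apply/leTf; lia.
  by move/leTf; lia.
- move=> E; apply/eqP; rewrite eqn_leq !mono //; apply/leTf; lia.
Qed.

Section Construct.
Variables (T : {set {set 'I_n}}) (g : word n).
Hypothesis Hg : Ps T g.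

Lemma g_sim i j : simb T i j -> g i = g j.
Proof.
case: Hg => _ mono _ _ /simbP[H1 H2]; apply/eqP.
by rewrite eqn_leq (mono _ _ H1) (mono _ _ H2).
Qed.

Definition m (i : 'I_n) : 'I_n := [arg min_(k < i | simb T i k) val k].

Lemma m_spec i : simb T i (m i) /\ forall k, simb T i k -> m i <= k.
Proof.
rewrite /m; case: arg_minnP => [|k Hk Hmin]; first exact: simb_refl.
by split.
Qed.

Lemma m_eqE i j : (m i == m j) = simb T i j.
Proof.
have [si mi] := m_spec i; have [sj mj] := m_spec j.
apply/idP/idP.
- move/eqP => E; apply: (simb_trans si); rewrite E; exact: simb_sym.
- move=> sij; apply/eqP/val_inj/eqP; rewrite eqn_leq.
  rewrite mi ?mj //; first exact: (simb_trans (simb_sym sij) si).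
  exact: simb_trans sij sj.
Qed.

Definition key i := g i * n + m i.

Lemma key_lt_g i j : g i < g j -> key i < key j.
Proof.
move=> H; rewrite /key.
have := ltn_ord (m i); have : g i * n + n <= g j * n.
  by rewrite -mulSnr leq_mul2r H orbT.
lia.
Qed.

Lemma key_le_g i j : key i <= key j -> g i <= g j.
Proof. move=> H; rewrite leqNgt; apply/negP => /key_lt_g; by rewrite ltnNge H. Qed.

Lemma key_eq i j : key i = key j -> g i = g j /\ m i = m j :> nat.
Proof.
move=> E; have gij : g i = g j.
  by apply/eqP; rewrite eqn_leq !key_le_g // E.
split => //; move: E; rewrite /key gij; lia.
Qed.

Definition fc := pack key.

Lemma fc_Lext : Lext T fc.
Proof.
split; first exact: pack_packed.
- move=> i j; split.
  + move/eqP; rewrite pack_eqE => /eqP /key_eq [_ E].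
    apply/simbP; rewrite -m_eqE; apply/eqP; exact: val_inj.
  + move/simbP => S; apply/eqP; rewrite pack_eqE; apply/eqP.
    by rewrite /key (g_sim S); move: S; rewrite -m_eqE => /eqP ->.
- move=> i j [Lij NLji]; rewrite /fc pack_ltE.
  case: Hg => _ mono strict _.
  have := mono _ _ Lij; rewrite leq_eqVlt => /orP[/eqP gij|]; last exact: key_lt_g.
  have [si mi] := m_spec i; have [sj mj] := m_spec j.
  have gm : g (m i) = g (m j).
    by rewrite -(g_sim si) -(g_sim sj).
  have ne : m i != m j.
    rewrite m_eqE; apply/negP => /simbP[_ ?]; exact: NLji.
  have [si1 si2] := (simbP _ _ _ si); have [sj1 sj2] := (simbP _ _ _ sj).
  have Lm : ltT T (m i) (m j).
    split; first exact: leT_trans si2 (leT_trans Lij sj1).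
    move=> H; apply: NLji; exact: leT_trans sj1 (leT_trans H si2).
  have nlt : ~~ (m j < m i).
    apply/negP => H; have := strict _ _ Lm H; rewrite gm ltnn.
    done.
  rewrite /key gij.
  have : (m i : nat) != m j by apply: contra ne => /eqP E; apply/eqP/val_inj.
  move: nlt; lia.
Qed.

Lemma fc_le : word_le g fc.
Proof.
move=> i j; split.
- by rewrite /fc pack_leE; exact: key_le_g.
- rewrite /fc pack_ltE => H ij.
  have := key_le_g (ltnW H); rewrite leq_eqVlt => /orP[/eqP gji|//].
  exfalso.
  have mji : m j < m i by move: H; rewrite /key gji; lia.
  have [si mi] := m_spec i; have [sj mj] := m_spec j.
  have mii := mi _ (simb_refl T i).
  case: Hg => _ _ _ c3.
  have := c3 (m j) i j _ ij (simbP _ _ _ (simb_sym sj)).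
  case.
  + lia.
  + by rewrite -(g_sim sj).
  + by [].
  + move=> /simbP S _.
    have := mi _ (simb_sym S).
    lia.
- move/eqP; rewrite /fc pack_eqE => /eqP /key_eq [] //.
Qed.

End Construct.
End Gen.

Theorem corollary20 (n : nat) (T : {set {set 'I_n}}) (hT : is_topology T) :
  (* P_s(T) = U_{f in L(T)} {g | g <= f} *)
  (forall g : word n,
      Ps T g <-> exists2 f, Lext T f & packed g /\ word_le g f) /\
  (* U_{f in L(T)} {g | g <= f} = U_{f in L(T)} P_s(T_f) *)
  (forall g : word n,
      (exists2 f, Lext T f & packed g /\ word_le g f) <->
      (exists2 f, Lext T f & Ps (topology_of_word f) g)) /\
  (* the first union is disjoint *)
  (forall (f f' g : word n), Lext T f -> Lext T f' ->
      packed g -> word_le g f -> word_le g f' -> f = f') /\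
  (* the second union is disjoint *)
  (forall (f f' g : word n), Lext T f -> Lext T f' ->
      Ps (topology_of_word f) g -> Ps (topology_of_word f') g -> f = f').
Proof.
split; [|split; [|split]].
- move=> g; split.
  + move=> Hg; exists (fc T g); first exact: fc_Lext.
    split; [by case: Hg | exact: fc_le].
  + case=> f Lf [gp W]; exact: PsA Lf gp W.
- move=> g; split.
  + case=> f Lf [gp W]; exists f => //.
    apply: PsA gp W; apply: Lext_Tf; by case: Lf.
  + case=> f Lf Hp; exists f => //; split; first by case: Hp.
    exact: Ps_Tf_le.
- move=> f f' g Lf Lf' _ W W'; exact: (disj Lf Lf' W W').
- move=> f f' g Lf Lf' H H'; exact: (disj Lf Lf' (Ps_Tf_le H) (Ps_Tf_le H')).
Qed.
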